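(* Let $\mathrm{SNR}>0$, $C=\frac12\log(1+\mathrm{SNR})$, $R_{\mathrm{crit}}<R<C$, and $\theta=\theta(R)$. Define $$\beta^*=\frac{\cos^2\theta}{2}+\frac{\cos^2\theta}{2}\sqrt{1+\frac{4}{\mathrm{SNR}\cos^2\theta}}-1,\qquad r(\beta)=(1+\beta)\tan\theta.$$ Then $$\frac{\mathrm{SNR}\,(\beta^* )^2}{2}+E_h\big(r(\beta^* )^2\,\mathrm{SNR}\big)=E_{\mathrm{sp}}(R;\mathrm{SNR}).$$
   Context: Logarithms are natural. $\theta(R)\in(0,\pi/2]$ is defined by $\sin\theta(R)=e^{-R}$. $E_h(\mu)=\frac12(\mu-1-\log\mu)$ if $\mu\ge1$ and $E_h(\mu)=0$ otherwise. $R_{\mathrm{crit}}=\frac12\log\Big(\frac12+\frac{\mathrm{SNR}}4+\frac12\sqrt{1+\frac{\mathrm{SNR}^2}{4}}\Big)$. $E_{\mathrm{sp}}(R;\mathrm{SNR})=E_G(\beta_G,\rho_G)$ with $E_G(\beta,\rho)=\frac12\big[(1-\beta)(1+\rho)+\mathrm{SNR}+\rho\log\beta+\log(\beta-\frac{\mathrm{SNR}}{1+\rho})-2\rho R\big]$, $\beta_G=e^{2R}$, $\rho_G=\frac{\mathrm{SNR}}{2\beta_G}\Big(1+\sqrt{1+\frac{4\beta_G}{\mathrm{SNR}(\beta_G-1)}}\Big)-1$. *)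

(* Defs.v *)
From Stdlib Require Import Reals Lra.
Open Scope R_scope.

Definition E_h (mu : R) : R :=
  if Rle_dec 1 mu then / 2 * (mu - 1 - ln mu) else 0.

Definition R_crit (SNR : R) : R :=
  / 2 * ln (/ 2 + SNR / 4 + / 2 * sqrt (1 + SNR ^ 2 / 4)).

Definition E_G (SNR Rt beta rho : R) : R :=
  / 2 * ((1 - beta) * (1 + rho) + SNR + rho * ln beta
         + ln (beta - SNR / (1 + rho)) - 2 * rho * Rt).

Definition beta_G (Rt : R) : R := exp (2 * Rt).

Definition rho_G (SNR Rt : R) : R :=
  SNR / (2 * beta_G Rt) *
    (1 + sqrt (1 + 4 * beta_G Rt / (SNR * (beta_G Rt - 1)))) - 1.

Definition E_sp (Rt SNR : R) : R := E_G SNR Rt (beta_G Rt) (rho_G SNR Rt).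

Definition capacity (SNR : R) : R := / 2 * ln (1 + SNR).

Definition beta_star (SNR theta : R) : R :=
  (cos theta) ^ 2 / 2
  + (cos theta) ^ 2 / 2 * sqrt (1 + 4 / (SNR * (cos theta) ^ 2)) - 1.

Definition r_fun (theta beta : R) : R := (1 + beta) * tan theta.

(* Main.v *)
Require Import Defs.
From Stdlib Require Import Reals Lra.
Open Scope R_scope.

Lemma alg (C2 Q : R) (hC : 0 < C2 < 1) (hQ : 1 < Q) :
  let SNR := 4 / (C2 * (Q^2 - 1)) in
  let S2 := 1 - C2 in
  let b := C2/2 + C2/2*Q - 1 in
  let mu := (1 + b)^2 * S2 / C2 * SNR in
  let beta := / S2 in
  let rho := SNR / (2 * beta) * (1 + Q) - 1 in
  mu = S2 * (1+Q)/(Q-1) /\ beta - SNR/(1+rho) = / mu /\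
  SNR * b^2 + mu - 1 = (1-beta)*(1+rho) + SNR.
Proof.
  intros SNR S2 b mu beta rho.
  assert (Q - 1 <> 0) by lra. assert (Q + 1 <> 0) by lra.
  assert (Q^2 - 1 <> 0) by nra. assert (C2 <> 0) by lra. assert (1 - C2 <> 0) by lra.
  assert (Hmu : mu = S2 * (1+Q)/(Q-1)).
  { unfold mu, SNR, S2, b. field. auto. }
  split; [exact Hmu|]. split.
  - rewrite Hmu. unfold rho, beta, SNR, S2. field. repeat split; auto; nra.
  - rewrite Hmu. unfold rho, beta, SNR, S2, b. field. repeat split; auto.
Qed.

Theorem mainTheorem3 (SNR Rt theta : R)
  (hSNR : 0 < SNR)
  (hR1 : R_crit SNR < Rt) (hR2 : Rt < capacity SNR)
  (htheta : 0 < theta <= PI / 2) (hsin : sin theta = exp (- Rt)) :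
  SNR * (beta_star SNR theta) ^ 2 / 2
    + E_h ((r_fun theta (beta_star SNR theta)) ^ 2 * SNR)
  = E_sp Rt SNR.
Proof.
  set (s := sin theta) in *. set (c := cos theta).
  assert (Hsc : s^2 + c^2 = 1).
  { unfold s, c. pose proof (sin2_cos2 theta). unfold Rsqr in H. lra. }
  assert (HRt : 0 < Rt).
  { eapply Rle_lt_trans; [|exact hR1]. unfold R_crit.
    assert (1 <= sqrt (1 + SNR ^ 2 / 4)).
    { apply Rle_trans with (sqrt 1); [rewrite sqrt_1; lra|]. apply sqrt_le_1_alt. pose proof (pow2_ge_0 SNR); lra. }
    assert (0 < ln (/ 2 + SNR / 4 + / 2 * sqrt (1 + SNR ^ 2 / 4))).
    { rewrite <- ln_1. apply ln_increasing; lra. }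
    lra. }
  assert (Hs0 : 0 < s) by (rewrite hsin; apply exp_pos).
  assert (Hs1 : s < 1).
  { rewrite hsin. rewrite <- exp_0. apply exp_increasing. lra. }
  assert (Hb : exp (2 * Rt) = / s^2).
  { rewrite hsin. rewrite <- pow_inv.
    replace (/ exp (- Rt)) with (exp Rt).
    2:{ rewrite exp_Ropp. field. apply Rgt_not_eq, exp_pos. }
    simpl. rewrite Rmult_1_r, <- exp_plus. f_equal. ring. }
  assert (HC2 : 0 < c^2 < 1) by nra.
  assert (Hc0 : c <> 0) by (intro Hc; rewrite Hc in HC2; simpl in HC2; lra).
  assert (Hcap : / s^2 < 1 + SNR).
  { rewrite <- Hb. unfold capacity in hR2.
    rewrite <- (exp_ln (1 + SNR)) by lra. apply exp_increasing. lra. }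
  set (D := 1 + 4 / (SNR * c^2)).
  assert (HD : 1 < D).
  { unfold D. assert (0 < 4 / (SNR * c^2)). { apply Rdiv_lt_0_compat; nra. } lra. }
  set (Q := sqrt D).
  assert (HQ2 : Q^2 = D). { unfold Q. simpl. rewrite Rmult_1_r. apply sqrt_sqrt. lra. }
  assert (HQ : 1 < Q). { unfold Q. rewrite <- sqrt_1. apply sqrt_lt_1_alt. lra. }
  assert (HSNR : SNR = 4 / (c^2 * (Q^2 - 1))).
  { rewrite HQ2. unfold D. field. split; nra. }
  assert (Hs2 : s^2 = 1 - c^2) by lra.
  pose proof (alg (c^2) Q HC2 HQ) as [H1 [H2 H3]].
  cbv zeta in H1, H2, H3. rewrite <- HSNR in H1, H2, H3.
  assert (Hbs : beta_star SNR theta = c^2/2 + c^2/2*Q - 1).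
  { unfold beta_star. fold c. fold D Q. ring. }
  assert (Hmu : r_fun theta (beta_star SNR theta) ^ 2 * SNR
     = (1 + (c^2/2 + c^2/2*Q - 1))^2 * (1 - c^2) / c^2 * SNR).
  { unfold r_fun. rewrite Hbs. unfold tan. fold s c. rewrite <- Hs2. field. auto. }
  assert (Hrho : rho_G SNR Rt = SNR / (2 * / (1 - c^2)) * (1 + Q) - 1).
  { unfold rho_G, beta_G. rewrite Hb. rewrite Hs2.
    replace (1 + 4 * / (1 - c ^ 2) / (SNR * (/ (1 - c ^ 2) - 1))) with D.
    2:{ unfold D. field. repeat split; nra. }
    reflexivity. }
  unfold E_sp, E_G. rewrite Hrho. unfold beta_G at 2. rewrite ln_exp.
  unfold beta_G. rewrite Hb, Hs2. rewrite H2. rewrite Hmu, Hbs.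
  set (mu := (1 + (c ^ 2 / 2 + c ^ 2 / 2 * Q - 1)) ^ 2 * (1 - c ^ 2) / c ^ 2 * SNR) in *.
  assert (Hmu1 : 1 <= mu).
  { rewrite H1.
    assert (c^2 * Q <= 2 - c^2).
    { assert (SNR * (1 - c^2) > c^2).
      { rewrite <- Hs2. apply (Rmult_lt_compat_r (s^2)) in Hcap; [|nra].
        rewrite Rinv_l in Hcap by nra. nra. }
      rewrite HSNR in H.
      assert (4 * (1 - c^2) > c^2 * (c^2 * (Q^2 - 1))).
      { assert (0 < c^2 * (Q^2-1)) by nra.
        apply (Rmult_gt_compat_r (c^2 * (Q^2-1))) in H; [|nra].
        replace (4 / (c ^ 2 * (Q ^ 2 - 1)) * (1 - c ^ 2) * (c ^ 2 * (Q ^ 2 - 1)))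
          with (4 * (1 - c^2)) in H by (field; nra). nra. }
      nra. }
    apply (Rmult_le_reg_r (Q - 1)); [lra|].
    unfold Rdiv. rewrite Rmult_assoc, Rinv_l by lra. nra. }
  unfold E_h. destruct (Rle_dec 1 mu) as [_|n]; [|lra].
  assert (0 < mu) by lra.
  rewrite ln_Rinv by lra.
  replace (ln (exp (2 * Rt))) with (2 * Rt) by (rewrite ln_exp; reflexivity).
  set (b := c ^ 2 / 2 + c ^ 2 / 2 * Q - 1) in *.
  set (rho := SNR / (2 * / (1 - c ^ 2)) * (1 + Q) - 1) in *.
  nra.
Qed.
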